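(* Let $0<\alpha<1$ and $0<\gamma<1$, and for integers $t\ge1$ define $$S(t)\triangleq\sum_{i=1}^{t-1}\frac{(1-\gamma)\,\alpha^{t-i}}{1-\gamma^{i+1}}$$ (so $S(1)=0$). Let $t_0=\left\lceil \ln\!\left(\frac{1-\alpha}{1+\alpha-2\gamma\alpha}\right)\Big/\ln(\gamma)\right\rceil$ and $A_\gamma=\max\left\{\frac{(1-\gamma^{t_0})S(t_0)}{1-\gamma},\ \frac{2\alpha}{1-\alpha}\right\}$. Then for all integers $t\ge t_0$, $$S(t)\le\frac{A_\gamma(1-\gamma)}{1-\gamma^t}.$$ Furthermore, $$\lim_{t\to\infty}S(t)=\frac{(1-\gamma)\alpha}{1-\alpha}.$$
   Context: In the paper, $\alpha=(1-\eta\mu)^E$ is the contraction factor of $E$ gradient-descent steps with step size $\eta\in(0,\frac{2}{\mu+L}]$ on a $\mu$-strongly convex, $L$-smooth function, and $\gamma$ is a discount factor. *)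

(* Defs.v *)
From HB Require Import structures.
From mathcomp Require Import all_boot all_order all_algebra.
From mathcomp Require Import all_classical all_reals all_analysis.
Set Implicit Arguments. Unset Strict Implicit. Unset Printing Implicit Defensive.
Import Order.TTheory GRing.Theory Num.Theory.
Local Open Scope ring_scope.

Definition Ssum (R : realType) (alpha gamma : R) (t : nat) : R :=
  \sum_(1 <= i < t) ((1 - gamma) * alpha ^+ (t - i)) / (1 - gamma ^+ i.+1).

Definition t0 (R : realType) (alpha gamma : R) : int :=
  Num.ceil (ln ((1 - alpha) / (1 + alpha - 2 * gamma * alpha)) / ln gamma).

(* A_gamma = max { (1-gamma^t0) S(t0)/(1-gamma), 2 alpha/(1-alpha) };
   t0 >= 1 under the hypotheses, so we evaluate at the natural number |t0|. *)
Definition Agamma (R : realType) (alpha gamma : R) : R :=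
  Num.max ((1 - gamma ^+ `|t0 alpha gamma|%N) * Ssum alpha gamma `|t0 alpha gamma|%N
             / (1 - gamma))
          (2 * alpha / (1 - alpha)).

(* Main.v *)
Require Import Defs.
From HB Require Import structures.
From mathcomp Require Import all_boot all_order all_algebra.
From mathcomp Require Import all_classical all_reals all_analysis.
From mathcomp Require Import lra zify.
Import Order.TTheory GRing.Theory Num.Theory.
Local Open Scope ring_scope.
Set Implicit Arguments. Unset Strict Implicit.

Lemma gX_lt1 (R : realType) (g : R) n : 0 < g -> g < 1 -> (0 < n)%N -> 0 < 1 - g ^+ n.
Proof. move=> hg0 hg1 n0; rewrite subr_gt0; by rewrite expr_lt1 // ltW. Qed.

Lemma Srec (R : realType) (a g : R) t : (1 <= t)%N ->
  Ssum a g t.+1 = a * Ssum a g t + (1 - g) * a / (1 - g ^+ t.+1).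
Proof.
move=> t1; rewrite /Ssum big_nat_recr //= subSnn expr1; congr (_ + _).
rewrite mulr_sumr; apply: eq_big_nat => i /andP[_ it].
rewrite subSn //.
  by rewrite exprS; rewrite !mulrA [a * (1 - g)]mulrC.
exact: ltnW.
Qed.

Lemma Sge0 (R : realType) (a g : R) t : 0 < a -> 0 < g -> g < 1 -> 0 <= Ssum a g t.
Proof.
move=> ha0 hg0 hg1.
rewrite /Ssum; apply: sumr_ge0 => i _.
have h1 : 0 <= 1 - g by lra.
have h2 : 0 <= a ^+ (t - i) by apply: exprn_ge0; lra.
have h3 : g ^+ i.+1 <= 1 by apply: exprn_ile1; lra.
have h4 : 0 <= 1 - g ^+ i.+1 by lra.
by apply: divr_ge0 => //; apply: mulr_ge0.
Qed.

Lemma t0_prop (R : realType) (a g : R) (t : nat) :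
  0 < a -> a < 1 -> 0 < g -> g < 1 ->
  t0 a g <= t%:Z -> g ^+ t * (1 + a - 2 * g * a) <= 1 - a.
Proof.
move=> ha0 ha1 hg0 hg1; rewrite /t0 ceil_le_int => h.
have hd : 0 < 1 + a - 2 * g * a by nra.
have hq : 0 < (1 - a) / (1 + a - 2 * g * a) by apply: divr_gt0 => //; lra.
have hlg : ln g < 0 by apply: ln_lt0; lra.
rewrite ler_ndivrMr // in h.
have hgt : 0 < g ^+ t by apply: exprn_gt0.
have : ln (g ^+ t) <= ln ((1 - a) / (1 + a - 2 * g * a)).
  rewrite lnXn //; apply: le_trans h.
  have -> : (t%:~R : R) = t%:R by rewrite pmulrn.
  by rewrite mulr_natl.
move=> H; have hq' : (1 - a) / (1 + a - 2 * g * a) \is Num.pos by rewrite posrE.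
have hgt' : g ^+ t \is Num.pos by rewrite posrE.
by move: H; rewrite (ler_ln hgt' hq') ler_pdivlMr.
Qed.

Lemma t0_pos (R : realType) (a g : R) :
  0 < a -> a < 1 -> 0 < g -> g < 1 -> 0 < t0 a g.
Proof.
move=> ha0 ha1 hg0 hg1; rewrite /t0 ceil_gt_int.
have hd : 0 < 1 + a - 2 * g * a by nra.
have hq : 0 < (1 - a) / (1 + a - 2 * g * a) by apply: divr_gt0 => //; lra.
have hq1 : (1 - a) / (1 + a - 2 * g * a) < 1 by rewrite ltr_pdivrMr //; nra.
have hlg : ln g < 0 by apply: ln_lt0; lra.
have hlq : ln ((1 - a) / (1 + a - 2 * g * a)) < 0 by apply: ln_lt0; rewrite hq hq1.
by rewrite ltr_ndivlMr // mul0r.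
Qed.

Lemma part1 (R : realType) (a g : R) :
  0 < a -> a < 1 -> 0 < g -> g < 1 ->
  forall k, (1 - g ^+ (`|t0 a g|%N + k)) * Ssum a g (`|t0 a g|%N + k) <= Agamma a g * (1 - g).
Proof.
move=> ha0 ha1 hg0 hg1.
have tp := t0_pos ha0 ha1 hg0 hg1.
set N := `|t0 a g|%N.
have hN : t0 a g = N%:Z by rewrite /N gez0_abs // ltW.
have N1 : (1 <= N)%N by rewrite -(@ltz_nat 0) -hN.
have hA2 : 2 * a / (1 - a) <= Agamma a g by rewrite /Agamma le_max lexx orbT.
have hA1 : (1 - g ^+ N) * Ssum a g N / (1 - g) <= Agamma a g by rewrite /Agamma le_max lexx.
have hA2' : 2 * a <= Agamma a g * (1 - a) by rewrite -ler_pdivrMr // subr_gt0.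
elim=> [|k IH].
  by rewrite addn0 -ler_pdivrMr // subr_gt0.
have hk : t0 a g <= (N + k)%:Z by rewrite hN lez_nat leq_addr.
have hu := t0_prop ha0 ha1 hg0 hg1 hk.
rewrite addnS Srec; last exact: leq_trans N1 (leq_addr _ _).
set u := g ^+ (N + k) in hu IH *.
set S := Ssum a g (N + k) in IH *.
have hS : 0 <= S by apply: Sge0.
have hu0 : 0 < u by apply: exprn_gt0.
have hu1 : 0 < 1 - g ^+ (N + k).+1 by apply: gX_lt1.
rewrite exprS -/u in hu1 *.
have hne : 1 - g * u != 0 by apply: lt0r_neq0.
rewrite mulrDr (mulrC (1 - g * u) ((1 - g) * a / _)) divfK //.
clearbody u S N.
clear hA1 hA2 hN hk tp N1.
have h1 : 2 * a * (1 - g * u) <= (1 + a) * (1 - u) by lra.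
have h2a : 2 * a * (1 - g * u) * S <= (1 + a) * (1 - u) * S by apply: ler_wpM2r.
have h2b : (1 + a) * ((1 - u) * S) <= (1 + a) * (Agamma a g * (1 - g)).
  by apply: ler_wpM2l => //; lra.
have h3 : 2 * a * (1 - g) <= Agamma a g * (1 - a) * (1 - g).
  by apply: ler_wpM2r => //; lra.
lra.
Qed.

Lemma part2_bound (R : realType) (a g : R) :
  0 < a -> a < 1 -> 0 < g -> g < 1 ->
  let m := Num.max a g in let b := (1 + m) / 2 in
  let L := (1 - g) * a / (1 - a) in
  let C := m / (b - m) + L / b in
  forall t, `|Ssum a g t - L| <= C * b ^+ t.
Proof.
move=> ha0 ha1 hg0 hg1 m b L C.
have ham : a <= m by rewrite /m le_max lexx.
have hgm : g <= m by rewrite /m le_max lexx orbT.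
have hm1 : m < 1 by rewrite /m gt_max ha1 hg1.
have hb : m < b by rewrite /b; lra.
have hb1 : b < 1 by rewrite /b; lra.
have hb0 : 0 < b by lra.
have hL : 0 <= L by apply: divr_ge0; [nra | lra].
have hLa : L * (1 - a) = (1 - g) * a by rewrite /L divfK //; apply: lt0r_neq0; lra.
have hC1 : m <= C * (b - m).
  rewrite /C mulrDl divfK; last by apply: lt0r_neq0; lra.
  have : 0 <= L / b * (b - m) by apply: mulr_ge0; [apply: divr_ge0; lra | lra].
  lra.
have hC2 : L <= C * b.
  rewrite /C mulrDl divfK; last by apply: lt0r_neq0; lra.
  have : 0 <= m / (b - m) * b by apply: mulr_ge0; [apply: divr_ge0; lra | lra].
  lra.
have hC0 : 0 <= C by apply: addr_ge0; apply: divr_ge0; lra.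
have S0 : Ssum a g 0 = 0 by rewrite /Ssum big_geq.
have S1 : Ssum a g 1 = 0 by rewrite /Ssum big_geq.
case=> [|t].
  rewrite S0 sub0r normrN expr0 mulr1 ger0_norm //.
  have : L * b <= L by nra.
  nra.
elim: t => [|t IH].
  by rewrite S1 sub0r normrN expr1 ger0_norm.
rewrite Srec //.
set S := Ssum a g t.+1 in IH *.
set B := b ^+ t.+1 in IH *.
have hB0 : 0 <= B by apply: exprn_ge0; lra.
have hgB : g ^+ t.+1 <= B by apply: lerXn2r; rewrite ?nnegrE; lra.
set v := g ^+ t.+2.
have hv : v = g * g ^+ t.+1 by rewrite /v exprS.
have hv1 : 0 < 1 - v by apply: gX_lt1.
have hv0 : 0 <= g ^+ t.+1 by apply: exprn_ge0; lra.
have hg1' : g ^+ t.+1 <= 1 by apply: exprn_ile1; lra.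
have hvg : v <= g by rewrite hv -[X in _ <= X]mulr1 ler_pM2l.
set w := (1 - g) * a / (1 - v).
have hw : w * (1 - v) = (1 - g) * a by rewrite /w divfK //; apply: lt0r_neq0.
have hw0 : 0 <= w by apply: divr_ge0; [apply: mulr_ge0; lra | lra].
have hv0' : 0 <= v by rewrite hv; apply: mulr_ge0 => //; lra.
have hwv : 0 <= w * v by apply: mulr_ge0.
have hwa : w <= a.
  rewrite /w ler_pdivrMr //.
  have : 0 <= a * (g - v) by apply: mulr_ge0; lra.
  lra.
have hwv2 : w * v <= a * v by apply: ler_wpM2r.
have hvB : v <= B.
  apply: le_trans hgB; rewrite hv -[X in _ <= X]mul1r; apply: ler_wpM2r => //; lra.
have he2 : a * v <= m * B by apply: ler_pM => //; lra.
rewrite exprS -/B.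
move: IH; rewrite !ler_norml => /andP[I1 I2].
have hCB : 0 <= C * B by apply: mulr_ge0.
have J1 : a * (S - L) <= a * (C * B) by apply: ler_wpM2l => //; lra.
have J2 : a * (- (C * B)) <= a * (S - L) by apply: ler_wpM2l => //; lra.
have J3 : a * (C * B) <= m * (C * B) by apply: ler_wpM2r.
have J4 : (m + m * C) * B <= (C * b) * B by apply: ler_wpM2r => //; lra.
have J5 : m * (C * B) <= b * (C * B) by apply: ler_wpM2r => //; lra.
clearbody w v B S C L b m.
clear hgB hv hv1 hv0 hg1' hwa hw0 hv0' I1 I2 hC1 hC2 S0 S1 hb hb1 hL ham hgm hm1.
apply/andP; split; lra.
Qed.

Unset Implicit Arguments. Set Strict Implicit.
Local Open Scope classical_set_scope.
Theorem proposition2 (R : realType) (alpha gamma : R)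
  (ha0 : 0 < alpha) (ha1 : alpha < 1) (hg0 : 0 < gamma) (hg1 : gamma < 1) :
  (forall t : nat, t0 alpha gamma <= t%:Z ->
     Ssum alpha gamma t <= Agamma alpha gamma * (1 - gamma) / (1 - gamma ^+ t)) /\
  (Ssum alpha gamma t @[t --> \oo] --> (1 - gamma) * alpha / (1 - alpha)).
Proof.
split.
  move=> t ht.
  have tp := t0_pos ha0 ha1 hg0 hg1.
  have hN : t0 alpha gamma = (`|t0 alpha gamma|%N)%:Z by rewrite gez0_abs // ltW.
  have hNt : (`|t0 alpha gamma|%N <= t)%N by rewrite -lez_nat -hN.
  have N1 : (0 < `|t0 alpha gamma|%N)%N by rewrite -(@ltz_nat 0) -hN.
  have := part1 ha0 ha1 hg0 hg1 (t - `|t0 alpha gamma|%N).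
  rewrite subnKC //.
  have hp : 0 < 1 - gamma ^+ t by apply: gX_lt1 => //; apply: leq_trans hNt.
  by move=> H; rewrite ler_pdivlMr // mulrC.
have := part2_bound ha0 ha1 hg0 hg1.
set m := Num.max alpha gamma; set b := (1 + m) / 2.
set L := (1 - gamma) * alpha / (1 - alpha).
set C := m / (b - m) + L / b => hbd.
have hm1 : m < 1 by rewrite /m gt_max ha1 hg1.
have ham : alpha <= m by rewrite /m le_max lexx.
have hb : `|b| < 1 by rewrite ger0_norm /b; lra.
have hc := cvg_expr hb.
have Hf : (fun t => L - C * b ^+ t) @ \oo --> L - C * 0.
  exact: cvgB (cvg_cst L) (cvgMl_tmp (a:=C) hc).
have Hh : (fun t => L + C * b ^+ t) @ \oo --> L + C * 0.
  exact: cvgD (cvg_cst L) (cvgMl_tmp (a:=C) hc).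
rewrite mulr0 subr0 in Hf; rewrite mulr0 addr0 in Hh.
apply: (squeeze_cvgr _ Hf Hh).
apply: nearW => t.
have := hbd t; rewrite -/b -/C ler_norml => /andP[I1 I2].
apply/andP; split; lra.
Qed.
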